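(* Let $v\in\mathbb R^w$ and $u\in\{-1,1\}^w$ be such that $\|v-u\|_1\le(1-\kappa)w$, where $\kappa>0$ is a positive constant. Then with probability $1-\exp(-\Omega(w))$, $$\mathrm{ham}(\mathbf{Round}(v),u)\le\frac12\left(1-\frac\kappa2\right)w.$$
   Context: $\mathbf{Round}:\mathbb R\to\{-1,1\}$ is the randomized function with: for $t\in[-1,1]$, $\mathbf{Round}(t)=1$ with probability $\frac{1+t}2$ and $-1$ with probability $\frac{1-t}2$; for $|t|>1$, $\mathbf{Round}(t)=\mathrm{sign}(t)$. For $v\in\mathbb R^w$, $\mathbf{Round}(v)=(\mathbf{Round}(v_1),\dots,\mathbf{Round}(v_w))$ with independent randomness per coordinate. $\mathrm{ham}(x,y)$ is the number of coordinates where $x,y\in\{-1,1\}^w$ differ, and $\|\cdot\|_1$ is the $\ell_1$ norm. *)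

(* Defs.v *)
From mathcomp Require Import all_boot all_order all_algebra.
From mathcomp Require Import all_classical all_reals all_analysis.
Set Implicit Arguments. Unset Strict Implicit. Unset Printing Implicit Defensive.
Import Order.TTheory GRing.Theory Num.Theory.
Local Open Scope ring_scope.

(* Sign vectors in {-1,1}^w are encoded as boolean finite functions:
   true <-> +1, false <-> -1. *)
Definition signvec (w : nat) := {ffun 'I_w -> bool}.

Definition pm {R : numDomainType} (b : bool) : R := if b then 1 else -1.

Definition ham (w : nat) (x y : signvec w) : nat := #|[set i | x i != y i]|.

Definition l1dist {R : realDomainType} (w : nat) (v : 'I_w -> R) (u : signvec w) : R :=
  \sum_(i < w) `|v i - pm (u i)|.

(* Probability that Round(t) = 1. *)
Definition round_p {R : realFieldType} (t : R) : R :=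
  if 1 < t then 1 else if t < -1 then 0 else (1 + t) / 2.

Definition round_prob {R : realFieldType} (w : nat) (v : 'I_w -> R) (x : signvec w) : R :=
  \prod_(i < w) (if x i then round_p (v i) else 1 - round_p (v i)).

Definition round_event_prob {R : realFieldType} (w : nat) (v : 'I_w -> R)
  (E : pred (signvec w)) : R :=
  \sum_(x : signvec w | E x) round_prob v x.

(* Main.v *)
Require Import Defs.
From mathcomp Require Import all_boot all_order all_algebra.
From mathcomp Require Import all_classical all_reals all_analysis.
From mathcomp Require Import ring lra.
Import Order.TTheory GRing.Theory Num.Theory.
Set Implicit Arguments. Unset Strict Implicit.
Local Open Scope ring_scope.

Lemma prod_sum_ffun (R : realType) w (F : 'I_w -> bool -> R) :
  \sum_(x : signvec w) \prod_i F i (x i) = \prod_i (F i true + F i false).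
Proof.
have -> : \prod_i (F i true + F i false) = \prod_i \sum_(j : bool) F i j.
  by apply: eq_bigr => i _; rewrite big_bool.
by rewrite bigA_distr_bigA.
Qed.

Lemma ham_sum w (x u : signvec w) : ham x u = (\sum_i (x i != u i))%N.
Proof.
rewrite /ham -sum1_card big_mkcond /=; apply: eq_bigr => i _.
by rewrite inE; case: (x i != u i).
Qed.

Lemma round_p_01 (R : realType) (t : R) : 0 <= round_p t <= 1.
Proof.
rewrite /round_p; case: ifP => h1; first by rewrite ler01 lexx.
case: ifP => h2; first by rewrite lexx ler01.
move/negbT: h1; move/negbT: h2; rewrite -!leNgt => h2 h1.
apply/andP; split; lra.
Qed.

Lemma flip_le (R : realType) (t : R) (b : bool) :
  (if b then 1 - round_p t else round_p t) <= `|t - pm b| / 2.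
Proof.
have h1 := ler_norm (t - pm b); have h2 := ler_norm (-(t - pm b)).
rewrite normrN in h2.
rewrite /round_p /pm; case: b h1 h2 => h1 h2.
all: rewrite /pm in h1 h2.
all: case: ifP => a1; [lra|move/negbT: a1; rewrite -leNgt => a1].
all: case: ifP => a2; [lra|move/negbT: a2; rewrite -leNgt => a2; lra].
Qed.

Lemma G_le (R : realType) (t : R) (b : bool) (lam : R) (hl : 0 <= lam) :
  (if true then round_p t else 1 - round_p t) * expR (lam * (true != b)%:R) +
  (if false then round_p t else 1 - round_p t) * expR (lam * (false != b)%:R)
  <= expR (`|t - pm b| / 2 * (expR lam - 1)).
Proof.
have hf := flip_le t b.
have E1 : 1 <= expR lam by have := expR_ge1Dx lam; lra.
apply: le_trans (expR_ge1Dx _).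
case: b hf => hf /=; rewrite ?mulr0 ?mulr1 ?expR0 ?mulr1.
all: rewrite /pm in hf *.
- have h3 : 0 <= `|t - 1| / 2 - (1 - round_p t) by lra.
  have h4 : 0 <= expR lam - 1 by lra.
  have := mulr_ge0 h3 h4; lra.
- have h3 : 0 <= `|t - -1| / 2 - round_p t by lra.
  have h4 : 0 <= expR lam - 1 by lra.
  have := mulr_ge0 h3 h4; lra.
Qed.

Lemma mass1 (R : realType) w (v : 'I_w -> R) : \sum_x round_prob v x = 1.
Proof.
pose F := (fun i (j : bool) => if j then round_p (v i) else 1 - round_p (v i)).
transitivity (\prod_i (F i true + F i false)); first exact: prod_sum_ffun F.
by apply: big1 => i _ /=; rewrite addrC subrK.
Qed.

Lemma mgf_le (R : realType) w (v : 'I_w -> R) (u : signvec w) (lam : R) (hl : 0 <= lam) :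
  \sum_x round_prob v x * expR (lam * (ham x u)%:R) <=
  expR ((expR lam - 1) / 2 * l1dist v u).
Proof.
have -> : \sum_x round_prob v x * expR (lam * (ham x u)%:R) =
  \sum_(x : signvec w) \prod_i ((if x i then round_p (v i) else 1 - round_p (v i))
      * expR (lam * (x i != u i)%:R)).
  apply: eq_bigr => x _; rewrite /round_prob ham_sum natr_sum mulr_sumr expR_sum.
  by rewrite big_split.
rewrite (prod_sum_ffun (fun i (j : bool) => (if j then round_p (v i) else 1 - round_p (v i))
      * expR (lam * (j != u i)%:R))) /l1dist mulr_sumr expR_sum.
apply: ler_prod => i _; apply/andP; split.
  by apply: addr_ge0; apply: mulr_ge0; rewrite ?expR_ge0 //=; case/andP: (round_p_01 (v i)); lra.
by apply: le_trans (G_le (v i) (u i) hl) _; rewrite mulrC mulrA mulrAC.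
Qed.

Unset Implicit Arguments. Set Strict Implicit.
Theorem lemma8p3 (R : realType) (kappa : R) (hk : 0 < kappa) :
  exists c : R, 0 < c /\ exists w0 : nat, forall (w : nat), (w0 <= w)%N ->
  forall (v : 'I_w -> R) (u : signvec w),
    l1dist v u <= (1 - kappa) * w%:R ->
    round_event_prob v
      (fun x => (ham x u)%:R <= 2^-1 * (1 - kappa / 2) * w%:R)
      >= 1 - expR (- (c * w%:R)).
Proof.
have [hk1|hk1] := ltrP 1 kappa.
  exists 1; split; first exact: ltr01.
  exists 1%N => w hw v u hl; exfalso.
  have h0 : 0 <= l1dist v u by apply: sumr_ge0 => i _.
  have hw1 : 1 <= w%:R :> R by rewrite ler1n.
  nra.
pose lam := kappa / 4.
pose a := (1 - kappa) / 2.
pose b := 2^-1 * (1 - kappa / 2).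
pose E := expR lam.
have hl0 : 0 <= lam by rewrite /lam; lra.
have hE1 : 1 <= E by have := expR_ge1Dx lam; rewrite /E; lra.
have hE2 : E * (1 - lam) <= 1.
  have := expR_ge1Dx (- lam); rewrite expRN -/E => h.
  have hE0 : 0 < E by apply: expR_gt0.
  have : (1 - lam) * E <= E^-1 * E by rewrite ler_pM2r //; lra.
  by rewrite mulVf ?gt_eqF // mulrC.
have ha : 0 <= a by rewrite /a; lra.
exists (lam * b - a * (E - 1)); split.
  have h6 : a * (E - 1) * (1 - lam) <= a * lam.
    have -> : a * (E - 1) * (1 - lam) = a * (E * (1 - lam)) - a * (1 - lam) by ring.
    have := ler_wpM2l ha hE2; lra.
  have h7 : 0 < (1 - lam) by rewrite /lam; lra.
  have h8 : a * lam < lam * b * (1 - lam).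
    rewrite /a /b /lam; nra.
  have h9 : (lam * b - a * (E - 1)) * (1 - lam) > 0 by lra.
  by rewrite pmulr_lgt0 in h9.
exists 0%N => w _ v u hl.
set Ev := (fun x : signvec w => (ham x u)%:R <= 2^-1 * (1 - kappa / 2) * w%:R).
pose P := round_prob v.
pose Q := fun x => P x * expR (lam * (ham x u)%:R) * expR (- (lam * b * w%:R)).
have hP0 : forall x, 0 <= P x.
  move=> x; apply: prodr_ge0 => i _.
  by case: (x i); case/andP: (round_p_01 (v i)) => h1 h2; lra.
have hQ0 : forall x, 0 <= Q x.
  by move=> x; rewrite /Q; apply: mulr_ge0; [apply: mulr_ge0|]; rewrite ?expR_ge0.
have hsplit : \sum_x P x = round_event_prob v Ev + \sum_(x | ~~ Ev x) P x.
  by rewrite (bigID Ev).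
have hS1 : \sum_(x | ~~ Ev x) P x <= \sum_(x | ~~ Ev x) Q x.
  apply: ler_sum => x hx.
  have hlt : b * w%:R < (ham x u)%:R by rewrite /b ltNge; exact: hx.
  rewrite /Q -mulrA -expRD.
  have hge : 1 <= expR (lam * (ham x u)%:R + - (lam * b * w%:R)).
    have := expR_ge1Dx (lam * (ham x u)%:R + - (lam * b * w%:R)).
    have hd : 0 <= (ham x u)%:R - b * w%:R by lra.
    have := mulr_ge0 hl0 hd.
    lra.
  have := ler_wpM2l (hP0 x) hge; rewrite mulr1; done.
have hS2 : \sum_(x | ~~ Ev x) Q x <= \sum_x Q x.
  rewrite [X in _ <= X](bigID Ev) /= lerDr.
  by apply: sumr_ge0 => x _.
have hS3 : \sum_x Q x <= expR (- ((lam * b - a * (E - 1)) * w%:R)).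
  rewrite /Q -mulr_suml.
  have hm := mgf_le v u hl0.
  have hm2 : expR ((expR lam - 1) / 2 * l1dist v u) <= expR (a * (E - 1) * w%:R).
    rewrite ler_expR /a -/E.
    have h : 0 <= (E - 1) / 2 by lra.
    have := ler_wpM2l h hl; lra.
  have := ler_wpM2r (expR_ge0 (- (lam * b * w%:R))) (le_trans hm hm2).
  rewrite -expRD => h; apply: (le_trans h); rewrite ler_expR; lra.
have hm := mass1 v.
rewrite -/P in hm.
lra.
Qed.
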